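(* Let $f:\mathbb{R}\to\mathbb{R}$ be a concave function such that $f(0)=0$, $f$ is differentiable at $0$, $f'(0)\neq 0$, $\sup_x f(x)=M>0$, and $\operatorname{argsup}_x f(x)>0$. Let $\mathbb{P}$ and $\mathbb{Q}$ be probability distributions with support $\mathcal{X}$. Define $$\mathrm{D}^{S}(\mathbb{P},\mathbb{Q})=\sup_{C:\mathcal{X}\to\mathbb{R}}\mathbb{E}_{x\sim\mathbb{P}}[f(C(x))]+\mathbb{E}_{y\sim\mathbb{Q}}[f(-C(y))],$$ $$\mathrm{D}^{Rp}_f(\mathbb{P},\mathbb{Q})=\sup_{C:\mathcal{X}\to\mathbb{R}} 2\,\mathbb{E}_{x\sim\mathbb{P},\,y\sim\mathbb{Q}}\big[f(C(x)-C(y))\big],$$ $$\mathrm{D}^{Ralf}_f(\mathbb{P},\mathbb{Q})=\sup_{C:\mathcal{X}\to\mathbb{R}} 2\,\mathbb{E}_{x\sim\mathbb{P}}\Big[f\big(C(x)-\mathbb{E}_{y\sim\mathbb{Q}}C(y)\big)\Big],$$ $$\mathrm{D}^{Ra}_f(\mathbb{P},\mathbb{Q})=\sup_{C:\mathcal{X}\to\mathbb{R}} \mathbb{E}_{x\sim\mathbb{P}}\Big[f\big(C(x)-\mathbb{E}_{y\sim\mathbb{Q}}C(y)\big)\Big]+\mathbb{E}_{y\sim\mathbb{Q}}\Big[f\big(\mathbb{E}_{x\sim\mathbb{P}}C(x)-C(y)\big)\Big].$$ Then $\mathrm{D}^{S}(\mathbb{P},\mathbb{Q})\le \mathrm{D}^{Rp}_f(\mathbb{P},\mathbb{Q})$,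 $\mathrm{D}^{Rp}_f(\mathbb{P},\mathbb{Q})\le\mathrm{D}^{Ralf}_f(\mathbb{P},\mathbb{Q})$, and $\mathrm{D}^{Rp}_f(\mathbb{P},\mathbb{Q})\le\mathrm{D}^{Ra}_f(\mathbb{P},\mathbb{Q})$.
   Context: The suprema range over (measurable) critic functions $C:\mathcal{X}\to\mathbb{R}$ for which the expectations are defined. The condition $\operatorname{argsup}_x f(x)>0$ means the supremum of $f$ is reached at some positive $x$ (or approached as $x\to+\infty$). *)

(* Defs.v *)
From HB Require Import structures.
From mathcomp Require Import all_boot all_order all_algebra.
From mathcomp Require Import all_classical all_reals all_analysis.
Set Implicit Arguments. Unset Strict Implicit. Unset Printing Implicit Defensive.
Import Order.TTheory GRing.Theory Num.Theory.
Import numFieldNormedType.Exports.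
Local Open Scope classical_set_scope.
Local Open Scope ring_scope.

Definition concave (R : realType) (f : R -> R) : Prop :=
  forall (x y t : R), 0 <= t -> t <= 1 ->
    t * f x + (1 - t) * f y <= f (t * x + (1 - t) * y).

Definition critic d (X : measurableType d) (R : realType)
  (P Q : probability X R) (C : X -> R) : Prop :=
  measurable_fun setT C /\
  P.-integrable setT (EFin \o C) /\ Q.-integrable setT (EFin \o C).

Local Open Scope ereal_scope.

Definition D_S d (X : measurableType d) (R : realType) (f : R -> R)
  (P Q : probability X R) : \bar R :=
  ereal_sup [set v | exists C, critic P Q C /\
    v = \int[P]_x (f (C x))%:E + \int[Q]_y (f (- C y)%R)%:E].

(* D^{Rp}_f : E_{x~P, y~Q} with x, y independent, as an iterated integral *)
Definition D_Rp d (X : measurableType d) (R : realType) (f : R -> R)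
  (P Q : probability X R) : \bar R :=
  ereal_sup [set v | exists C, critic P Q C /\
    v = 2%:E * \int[P]_x \int[Q]_y (f (C x - C y)%R)%:E].

Definition D_Ralf d (X : measurableType d) (R : realType) (f : R -> R)
  (P Q : probability X R) : \bar R :=
  ereal_sup [set v | exists C, critic P Q C /\
    v = 2%:E * \int[P]_x (f (C x - Rintegral Q setT C)%R)%:E].

Definition D_Ra d (X : measurableType d) (R : realType) (f : R -> R)
  (P Q : probability X R) : \bar R :=
  ereal_sup [set v | exists C, critic P Q C /\
    v = \int[P]_x (f (C x - Rintegral Q setT C)%R)%:E
      + \int[Q]_y (f (Rintegral P setT C - C y)%R)%:E].

(* Main.v *)
Require Import Defs.
From HB Require Import structures.
From mathcomp Require Import all_boot all_order all_algebra.
From mathcomp Require Import all_classical all_reals all_analysis.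
From mathcomp Require Import ring lra measurable_realfun.
Import Order.TTheory GRing.Theory Num.Theory.
Import numFieldNormedType.Exports.
Local Open Scope classical_set_scope.
Local Open Scope ring_scope.
Lemma chord (R : realType) (f : R -> R) : concave f -> forall u b v, u < b -> b < v ->
  (b - u) * (f v - f b) <= (v - b) * (f b - f u).
Proof.
move=> hf u b v ub bv.
have vu : 0 < v - u by rewrite subr_gt0 (lt_trans ub bv).
have vu0 : v - u != 0 by rewrite gt_eqF.
set t := (v - b) / (v - u).
have t0 : 0 <= t by rewrite divr_ge0 //; lra.
have t1 : t <= 1 by rewrite ler_pdivrMr // mul1r; lra.
have := hf u v t t0 t1.
have -> : t * u + (1 - t) * v = b by rewrite /t; field.
move=> h; rewrite -(ler_pM2r vu) in h.
have e : (t * f u + (1 - t) * f v) * (v - u) = (v - b) * f u + (b - u) * f v.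
  by rewrite /t; field.
rewrite e in h; nra.
Qed.

Lemma supergrad (R : realType) (f : R -> R) : concave f -> forall b,
  exists s, forall z, f z <= f b + s * (z - b).
Proof.
move=> hf b.
pose S := [set (f v - f b) / (v - b) | v in [set v | b < v]].
have ub : forall u, u < b -> ubound S ((f b - f u) / (b - u)).
  move=> u ubb _ [v /= bv <-].
  have h := @chord _ f hf _ _ _ ubb bv.
  rewrite ler_pdivrMr ?subr_gt0 // mulrAC ler_pdivlMr ?subr_gt0 //; nra.
have hS : has_sup S.
  split; first by exists ((f (b + 1) - f b) / (b + 1 - b)), (b + 1) => //=; lra.
  by exists ((f b - f (b - 1)) / (b - (b - 1))); apply: ub; lra.
exists (sup S) => z.
case: (ltgtP z b) => hz.
- have := ge_sup (proj1 hS) (ub z hz).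
  rewrite ler_pdivlMr ?subr_gt0 // => h; nra.
- have := sup_upper_bound hS (ex_intro2 _ _ z hz erefl : S ((f z - f b) / (z - b))).
  rewrite ler_pdivrMr ?subr_gt0 // => h; nra.
- by rewrite hz subrr mulr0 addr0.
Qed.

Lemma concave_cont (R : realType) (f : R -> R) : concave f -> continuous f.
Proof.
move=> hf b.
have [s hs] := @supergrad _ f hf b.
pose K := `|s| + `|f (b + 1) - f b| + `|f b - f (b - 1)|.
have K0 : 0 <= K by rewrite /K; apply: addr_ge0; [apply: addr_ge0|]; exact: normr_ge0.
have lip : forall z, `|z - b| <= 1 -> `|f z - f b| <= K * `|z - b|.
  move=> z hz.
  have n1 := ler_norm s; have n2 := ler_norm (- s); rewrite normrN in n2.
  have n3 := ler_norm (f (b + 1) - f b); have n4 := ler_norm (- (f (b + 1) - f b)).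
  rewrite normrN in n4.
  have n5 := ler_norm (f b - f (b - 1)); have n6 := ler_norm (- (f b - f (b - 1))).
  rewrite normrN in n6.
  have hsz := hs z.
  case: (lerP b z) => bz.
  + have t0 : 0 <= z - b by rewrite subr_ge0.
    have t1 : z - b <= 1 by move: hz; rewrite ger0_norm.
    have := hf (b + 1) b (z - b) t0 t1.
    have -> : (z - b) * (b + 1) + (1 - (z - b)) * b = z by ring.
    move=> h; rewrite ler_norml /K; apply/andP; split; nra.
  + have t0 : 0 <= b - z by rewrite subr_ge0 ltW.
    have t1 : b - z <= 1 by move: hz; rewrite ler0_norm ?opprB // subr_le0 ltW.
    have := hf (b - 1) b (b - z) t0 t1.
    have -> : (b - z) * (b - 1) + (1 - (b - z)) * b = z by ring.
    move=> h; rewrite ler_norml /K.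
    apply/andP; split; nra.
apply/cvgrPdist_le => e e0.
apply/nbhs_normP; exists (Num.min 1 (e / (K + 1))).
  by rewrite /= lt_min ltr01 divr_gt0 //; lra.
move=> z /=; rewrite lt_min => /andP[z1 z2].
rewrite distrC in z1 z2.
have := lip z (ltW z1).
move=> h; rewrite -normrN opprB; apply: (le_trans h).
have : `|z - b| * (K + 1) <= e by rewrite -ler_pdivlMr; [exact: ltW| lra].
have := normr_ge0 (z - b); nra.
Qed.
Local Open Scope ereal_scope.
Local Open Scope ereal_scope.

Lemma int_Ksub d (X : measurableType d) (R : realType) (P : probability X R) (K : R)
  (phi : X -> \bar R) :
  (0 <= K)%R -> measurable_fun setT phi -> (forall x, 0 <= phi x) ->
  \int[P]_x (K%:E - phi x) = K%:E - \int[P]_x phi x.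
Proof.
move=> K0 mphi phi0.
have cstE : \int[P]_x (K%:E) = K%:E.
  rewrite integral_cst //. set u := (X in _ * X). have -> : u = 1 by exact: probability_setT. by rewrite mule1.
have mg : measurable_fun setT (fun x => K%:E - phi x).
  by apply: emeasurable_funB.
have [fin|inf] := ltP (\int[P]_x phi x) +oo.
- have iphi : P.-integrable setT phi.
    apply/integrableP; split => //.
    by under eq_integral do rewrite gee0_abs //.
  rewrite integralB //; first by rewrite cstE.
  exact: finite_measure_integrable_cst.
- have phiinf : \int[P]_x phi x = +oo by apply/eqP; rewrite -leye_eq.
  rewrite phiinf /= integralE.
  set g := fun x => K%:E - phi x.
  have h : \int[P]_x phi x <= \int[P]_x (g^\- x + K%:E).
    apply: ge0_le_integral => //.
    - apply: emeasurable_funD => //; exact: measurable_funeneg.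
    - move=> x _; rewrite /g funenegE.
      move: (phi0 x); case: (phi x) => [r| |] // r0.
      + rewrite -EFinB -EFinN -EFin_max -EFinD lee_fin -lerBlDr le_max.
        by apply/orP; left; lra.
  rewrite ge0_integralD // ?cstE ?phiinf in h; last exact: measurable_funeneg.
  move: h; case: (\int[P]_x g^\- x) => [r| |] //.
  by move=> _ /=; rewrite !addeNy.
Qed.

Lemma integrable_lin d (X : measurableType d) (R : realType) (P : probability X R)
  (g : X -> R) (c k : R) :
  P.-integrable setT (EFin \o g) ->
  P.-integrable setT (EFin \o (fun x => c + k * g x)%R).
Proof.
move=> ig.
have -> : EFin \o (fun x => c + k * g x)%R =
  ((EFin \o cst c) \+ (fun x => k%:E * (EFin \o g) x)).
  by apply/funext => x /=; rewrite EFinD EFinM.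
apply: integrableD => //; first exact: finite_measure_integrable_cst.
exact: integrableZl.
Qed.

Lemma int_lin d (X : measurableType d) (R : realType) (P : probability X R)
  (g : X -> R) (c k : R) :
  P.-integrable setT (EFin \o g) ->
  \int[P]_x ((c + k * g x)%R)%:E = ((c + k * Rintegral P setT g)%R)%:E.
Proof.
move=> ig.
transitivity (\int[P]_x ((EFin \o cst c) x + k%:E * (EFin \o g) x)).
  by apply: eq_integral => x _ /=; rewrite EFinD EFinM.
rewrite integralD //; last 2 first.
- exact: finite_measure_integrable_cst.
- exact: integrableZl.
have cE : \int[P]_x (EFin \o cst c) x = c%:E.
  rewrite (_ : EFin \o cst c = cst c%:E) // integral_cst //.
  set u := (X in _ * X). have -> : u = 1 by exact: probability_setT.
  by rewrite mule1.
rewrite integralZl // cE /Rintegral EFinD EFinM fineK //.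
exact: integrable_fin_num.
Qed.

Lemma Rint_lin d (X : measurableType d) (R : realType) (P : probability X R)
  (g : X -> R) (c k : R) :
  P.-integrable setT (EFin \o g) ->
  Rintegral P setT (fun x => c + k * g x)%R = (c + k * Rintegral P setT g)%R.
Proof. by move=> ig; rewrite /Rintegral int_lin. Qed.

Lemma jensen d (X : measurableType d) (R : realType) (P : probability X R)
  (f : R -> R) (M : R) (g : X -> R) :
  concave f -> (forall x, (f x <= M)%R) ->
  measurable_fun setT g -> P.-integrable setT (EFin \o g) ->
  ((M - f (Rintegral P setT g))%R)%:E <= \int[P]_x ((M - f (g x))%R)%:E.
Proof.
move=> hf fM mg ig.
set b := Rintegral P setT g.
have [s hs] := @supergrad _ f hf b.
have mfg : measurable_fun setT (fun x => (M - f (g x))%R).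
  apply: measurable_funB => //; apply: measurableT_comp => //.
  exact: (continuous_measurable_fun (@concave_cont _ f hf)).
have [fin|inf] := ltP (\int[P]_x ((M - f (g x))%R)%:E) +oo; last first.
  by move: inf; rewrite leye_eq => /eqP ->; exact: leey.
have ifg : P.-integrable setT (EFin \o (fun x => (M - f (g x))%R)).
  apply/integrableP; split; first exact/measurable_EFinP.
  under eq_integral do rewrite /= ger0_norm ?subr_ge0 //.
  exact: fin.
have -> : ((M - f b)%R)%:E = \int[P]_x (((M - f b + s * b) + (- s) * g x)%R)%:E.
  by rewrite int_lin // -/b; congr (_%:E); ring.
apply: le_integral => //; first exact: integrable_lin.
move=> x _; rewrite lee_fin; have := hs (g x); lra.
Qed.

Lemma arith1 (R : realType) (M : R) (a1 a2 b : \bar R) :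
  0 <= a1 -> 0 <= a2 -> 0 <= b -> b <= (2^-1)%:E * (a1 + a2) ->
  (M%:E - a1) + (M%:E - a2) <= 2%:E * (M%:E - b).
Proof.
move: a1 a2 b => [a1| |] [a2| |] [b| |] //=; rewrite ?lee_fin => h1 h2 h3 //.
- by move=> h; lra.
all: move=> h; rewrite ?addeNy ?addNye ?leNye //.
Qed.

Lemma arith2 (R : realType) (M : R) (i j : \bar R) :
  0 <= j -> j <= i -> 2%:E * (M%:E - i) <= 2%:E * (M%:E - j).
Proof.
move: i j => [i| |] [j| |] //=; rewrite ?lee_fin => h1 h2 //.
- lra.
all: rewrite ?addeNy ?addNye; try (rewrite mulrNy gtr0_sg // mul1e); rewrite ?leNye //.
Qed.

Lemma arith3 (R : realType) (M : R) (i j k : \bar R) :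
  0 <= j -> 0 <= k -> j <= i -> k <= i ->
  2%:E * (M%:E - i) <= (M%:E - j) + (M%:E - k).
Proof.
move: i j k => [i| |] [j| |] [k| |] //=; rewrite ?lee_fin => h1 h2 h3 h4 //.
- lra.
all: rewrite ?addeNy ?addNye; try (rewrite mulrNy gtr0_sg // mul1e); rewrite ?leNye //.
Qed.

Lemma int_cstP d (X : measurableType d) (R : realType) (P : probability X R) (c : \bar R) :
  \int[P]_x c = c.
Proof.
rewrite integral_cst //.
set u := (X in _ * X). have -> : u = 1 by exact: probability_setT.
by rewrite mule1.
Qed.

Local Open Scope ereal_scope.

Arguments int_Ksub {d X R} P K {phi}.
Arguments integrable_lin {d X R P g}.
Arguments int_lin {d X R P g}.
Arguments Rint_lin {d X R P g}.
Arguments jensen {d X R} P {f M g}.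

Lemma int_f d (X : measurableType d) (R : realType) (P : probability X R) (M : R)
  (h : X -> R) :
  (0 <= M)%R -> measurable_fun setT h -> (forall x, (h x <= M)%R) ->
  \int[P]_x (h x)%:E = M%:E - \int[P]_x ((M - h x)%R)%:E.
Proof.
move=> M0 mh hM.
rewrite -int_Ksub //.
- by apply: eq_integral => x _; rewrite -EFinB; congr (_%:E); ring.
- apply/measurable_EFinP; exact: (measurable_funB (measurable_cst M) mh).
- by move=> x; rewrite lee_fin subr_ge0.
Qed.
Arguments int_f {d X R} P M {h}.
Local Close Scope ereal_scope.

Theorem mainTheorem3 (R : realType) (f : R -> R) (M : R)
  (d : measure_display) (X : measurableType d) (P Q : probability X R) :
  concave f ->
  f 0 = 0 ->
  derivable f 0 1 ->
  derive1 f 0 != 0 ->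
  (forall x, f x <= M) ->
  (forall e : R, 0 < e -> exists x, M - e < f x) ->
  0 < M ->
  ((exists x0, 0 < x0 /\ f x0 = M) \/ (f x @[x --> +oo] --> M)) ->
  (D_S f P Q <= D_Rp f P Q)%E /\
  (D_Rp f P Q <= D_Ralf f P Q)%E /\
  (D_Rp f P Q <= D_Ra f P Q)%E.
Proof.
move=> hf f0 df dfn fM supM M0 arg.
have M0' : (0 <= M)%R := ltW M0.
have mf : measurable_fun setT f := continuous_measurable_fun (@concave_cont _ f hf).
Local Open Scope ereal_scope.
pose Gm (C : X -> R) : X * X -> \bar R := fun p => ((M - f (C p.1 - C p.2))%R)%:E.
have mG : forall C : X -> R, measurable_fun setT C -> measurable_fun setT (Gm C).
  move=> C mC; apply/measurable_EFinP.
  apply: (measurable_funB (measurable_cst M)); apply: measurableT_comp => //.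
  exact: (measurable_funB (measurableT_comp mC measurable_fst)
                          (measurableT_comp mC measurable_snd)).
have G0 : forall C p, 0 <= Gm C p by move=> C p; rewrite lee_fin subr_ge0.
have iter : forall C : X -> R, measurable_fun setT C ->
  \int[P]_x \int[Q]_y (f (C x - C y)%R)%:E =
  M%:E - \int[P]_x \int[Q]_y ((M - f (C x - C y))%R)%:E.
  move=> C mC.
  transitivity (\int[P]_x (M%:E - \int[Q]_y ((M - f (C x - C y))%R)%:E)).
    apply: eq_integral => x _; apply: int_f => //.
    apply: measurableT_comp => //; exact: (measurable_funB (measurable_cst _) mC).
  apply: int_Ksub => //.
  - exact: (measurable_fun_fubini_tonelli_F (Gm C) (mG C mC) (G0 C)).
  - by move=> x; apply: integral_ge0 => y _; exact: G0 C (x, y).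
split; [|split].
- apply: ge_ereal_sup => _ [C [[mC [iPC iQC]] ->]].
  pose C' := fun x => (2^-1 * C x)%R.
  have mC' : measurable_fun setT C' := measurable_funM (measurable_cst _) mC.
  apply: le_ereal_sup_tmp; exists (2%:E * \int[P]_x \int[Q]_y (f (C' x - C' y))%:E).
    have eC : EFin \o C' = (fun x => (2^-1)%:E * (EFin \o C) x).
      by apply/funext => x; rewrite /= EFinM.
    by exists C'; split => //; split => //; rewrite eC; split; exact: integrableZl.
  have mnC : measurable_fun setT (fun y => - C y)%R := measurable_funN mC.
  have NN1 : forall x, 0 <= ((M - f (C x))%R)%:E by move=> x; rewrite lee_fin subr_ge0.
  have NN2 : forall y, 0 <= ((M - f (- C y))%R)%:E by move=> y; rewrite lee_fin subr_ge0.
  have M1 : measurable_fun setT (fun x => ((M - f (C x))%R)%:E).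
    apply/measurable_EFinP; apply: (measurable_funB (measurable_cst M)).
    exact: measurableT_comp.
  have M2 : measurable_fun setT (fun y => ((M - f (- C y))%R)%:E).
    apply/measurable_EFinP; apply: (measurable_funB (measurable_cst M)).
    exact: measurableT_comp.
  have k0 : (0 <= 2^-1 :> R)%R by rewrite invr_ge0.
  rewrite (int_f P M M0' _ (fun x => fM _)); last exact: measurableT_comp.
  rewrite (int_f Q M M0' _ (fun x => fM _)); last exact: measurableT_comp.
  rewrite iter //.
  set A2 := \int[Q]_y ((M - f (- C y))%R)%:E.
  have A20 : 0 <= A2 by apply: integral_ge0 => y _.
  apply: arith1.
  - by apply: integral_ge0 => x _.
  - exact: A20.
  - by apply: integral_ge0 => x _; apply: integral_ge0 => y _; rewrite lee_fin subr_ge0.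
  apply: (@le_trans _ _ (\int[P]_x ((2^-1)%:E * (((M - f (C x))%R)%:E + A2)))).
  + apply: ge0_le_integral => //.
    * by move=> x _; apply: integral_ge0 => y _; rewrite lee_fin subr_ge0.
    * exact: (measurable_fun_fubini_tonelli_F (Gm C') (mG C' mC') (G0 C')).
    * apply: emeasurable_funM => //; apply: emeasurable_funD => //.
    * move=> x _.
      have eq : \int[Q]_y ((2^-1)%:E * (((M - f (C x))%R)%:E + ((M - f (- C y))%R)%:E))
          = (2^-1)%:E * (((M - f (C x))%R)%:E + A2).
        rewrite (ge0_integralZl_EFin Q measurableT (fun y _ => adde_ge0 (NN1 x) (NN2 y))
          (emeasurable_funD (measurable_cst _) M2) k0).
        congr (_ * _).
        rewrite ge0_integralD //.
        rewrite integral_cst //.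
        set u := (X in _ * X). have -> : u = 1 by exact: probability_setT.
        by rewrite mule1.
      rewrite -eq; apply: ge0_le_integral => //.
      - by move=> y _; rewrite lee_fin subr_ge0.
      - apply/measurable_EFinP; apply: (measurable_funB (measurable_cst M)).
        apply: measurableT_comp => //.
        exact: (measurable_funB (measurable_cst _) mC').
      - apply: emeasurable_funM => //; apply: emeasurable_funD => //.
      - move=> y _; rewrite -EFinD -EFinM lee_fin.
        have := hf (C x) (- C y)%R (2^-1)%R k0.
        rewrite (_ : (2^-1 * C x + (1 - 2^-1) * - C y = C' x - C' y)%R); last first.
          by rewrite /C'; field.
        move=> /(_ _)/wrap[]; first by rewrite invf_le1 // ler1n.
        lra.
  + rewrite (ge0_integralZl_EFin P measurableT (fun x _ => adde_ge0 (NN1 x) A20)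
          (emeasurable_funD M1 (measurable_cst _)) k0).
    by rewrite ge0_integralD // int_cstP.
- apply: ge_ereal_sup => _ [C [[mC [iPC iQC]] ->]].
  apply: le_ereal_sup_tmp.
  exists (2%:E * \int[P]_x (f (C x - Rintegral Q setT C))%:E); first by exists C.
  have mh : measurable_fun setT (fun x => M - f (C x - Rintegral Q setT C))%R.
    apply: (measurable_funB (measurable_cst M)); apply: measurableT_comp => //.
    exact: (measurable_funB mC (measurable_cst _)).
  rewrite iter // (int_f P M M0' _ (fun x => fM _)); last first.
    apply: measurableT_comp => //; exact: (measurable_funB mC (measurable_cst _)).
  apply: arith2; first by apply: integral_ge0 => x _; rewrite lee_fin subr_ge0.
  apply: ge0_le_integral => //.
  - by move=> x _; rewrite lee_fin subr_ge0.
  - exact/measurable_EFinP.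
  - exact: (measurable_fun_fubini_tonelli_F (Gm C) (mG C mC) (G0 C)).
  - move=> x _.
    have mg : measurable_fun setT (fun y => C x + -1 * C y)%R :=
      measurable_funD (measurable_cst _) (measurable_funM (measurable_cst _) mC).
    have := jensen Q hf fM mg (integrable_lin _ _ iQC).
    rewrite Rint_lin // mulN1r.
    by under eq_integral do rewrite mulN1r.
- apply: ge_ereal_sup => _ [C [[mC [iPC iQC]] ->]].
  apply: le_ereal_sup_tmp.
  exists (\int[P]_x (f (C x - Rintegral Q setT C)%R)%:E
      + \int[Q]_y (f (Rintegral P setT C - C y)%R)%:E); first by exists C.
  have mh1 : measurable_fun setT (fun x => M - f (C x - Rintegral Q setT C))%R.
    apply: (measurable_funB (measurable_cst M)); apply: measurableT_comp => //.
    exact: (measurable_funB mC (measurable_cst _)).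
  have mh2 : measurable_fun setT (fun y => M - f (Rintegral P setT C - C y))%R.
    apply: (measurable_funB (measurable_cst M)); apply: measurableT_comp => //.
    exact: (measurable_funB (measurable_cst _) mC).
  rewrite iter // (int_f P M M0' _ (fun x => fM _)); last first.
    apply: measurableT_comp => //; exact: (measurable_funB mC (measurable_cst _)).
  rewrite (int_f Q M M0' _ (fun x => fM _)); last first.
    apply: measurableT_comp => //; exact: (measurable_funB (measurable_cst _) mC).
  apply: arith3.
  - by apply: integral_ge0 => x _; rewrite lee_fin subr_ge0.
  - by apply: integral_ge0 => x _; rewrite lee_fin subr_ge0.
  - apply: ge0_le_integral => //.
    + by move=> x _; rewrite lee_fin subr_ge0.
    + exact/measurable_EFinP.
    + exact: (measurable_fun_fubini_tonelli_F (Gm C) (mG C mC) (G0 C)).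
    + move=> x _.
      have mg : measurable_fun setT (fun y => C x + -1 * C y)%R :=
        measurable_funD (measurable_cst _) (measurable_funM (measurable_cst _) mC).
      have := jensen Q hf fM mg (integrable_lin _ _ iQC).
      rewrite Rint_lin // mulN1r.
      by under eq_integral do rewrite mulN1r.
  - have fub : \int[P]_x \int[Q]_y ((M - f (C x - C y))%R)%:E =
               \int[Q]_y \int[P]_x ((M - f (C x - C y))%R)%:E :=
      fubini_tonelli (Gm C) (mG C mC) (G0 C).
    rewrite fub; apply: ge0_le_integral => //.
    + by move=> x _; rewrite lee_fin subr_ge0.
    + exact/measurable_EFinP.
    + exact: (measurable_fun_fubini_tonelli_G (Gm C) (mG C mC) (G0 C)).
    + move=> y _.
      have mg : measurable_fun setT (fun x => - C y + 1 * C x)%R :=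
        measurable_funD (measurable_cst _) (measurable_funM (measurable_cst _) mC).
      have e : forall a b : R, (- b + 1 * a = a - b)%R.
        by move=> a b; rewrite mul1r addrC.
      have := jensen P hf fM mg (integrable_lin _ _ iPC).
      rewrite Rint_lin // e.
      by under eq_integral do rewrite e.
Qed.
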